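(* Let $n\geq1$ and $p,q>1$ satisfy \[ \frac{p+1}{pq-1}>\frac{n-1}{2},\qquad \frac{n-1}{2}(q-1)<1 . \] Let $\varepsilon>0$ and $C>0$. Then there do not exist $H\in C^1(\mathbb{R}_+)$ and $G\in C^2(\mathbb{R}_+)$ satisfying, for all $t\geq0$, \[ H'(t)\geq C\langle t\rangle^{-\frac{n-1}{2}(q-1)}G(t)^q,\quad H(t)\geq0,\quad H'(t)\geq0, \] \[ G''(t)+2G'(t)\geq C\langle t\rangle^{-\frac{n-1}{2}(p-1)}H(t)^p,\quad G(t)\geq C\varepsilon,\quad G'(t)\geq0 . \]
   Context: $\langle t\rangle:=\sqrt{1+t^2}$, $\mathbb{R}_+=[0,\infty)$. *)

(* Defs.v *)
From Stdlib Require Import Reals Lra.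
From Coquelicot Require Import Coquelicot.
Open Scope R_scope.

Definition jbr (t : R) : R := sqrt (1 + t ^ 2).

(* Real power x^y for x >= 0 (with 0^y = 0, appropriate for y > 0). *)
Definition rpow (x y : R) : R := if Rlt_dec 0 x then Rpower x y else 0.

Definition deriv_on_Rplus (f f' : R -> R) : Prop :=
  forall t, 0 <= t ->
    filterlim (fun h => (f (t + h) - f t) / h)
      (within (fun h => h <> 0 /\ 0 <= t + h) (locally 0))
      (locally (f' t)).

Definition cont_on_Rplus (g : R -> R) : Prop :=
  forall t, 0 <= t ->
    filterlim g (within (fun s => 0 <= s) (locally t)) (locally (g t)).

Definition C1_Rplus (f f' : R -> R) : Prop :=
  deriv_on_Rplus f f' /\ cont_on_Rplus f'.

(* Main.v *)
Require Import Defs.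
From Stdlib Require Import Reals Lra Psatz.
From Coquelicot Require Import Coquelicot.
Open Scope R_scope.

Lemma der_pos f f' t : deriv_on_Rplus f f' -> 0 < t -> is_derive f t (f' t).
Proof.
  intros D Ht. apply is_derive_Reals. intros e He.
  specialize (D t (Rlt_le _ _ Ht)).
  apply filterlim_locally with (eps := mkposreal e He) in D.
  destruct D as [d Hd].
  exists (mkposreal (Rmin d t) (Rmin_pos _ _ (cond_pos d) Ht)).
  intros h Hh0 Hh. simpl in Hh.
  assert (B : ball 0 d h).
  { change (Rabs (h - 0) < d). rewrite Rminus_0_r. eapply Rlt_le_trans; [exact Hh| apply Rmin_l]. }
  specialize (Hd h B).
  assert (Hr : Rabs h < t) by (eapply Rlt_le_trans; [exact Hh| apply Rmin_r]).
  assert (h <> 0 /\ 0 <= t + h) as Hc.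
  { split; auto. apply Rabs_def2 in Hr. lra. }
  specialize (Hd Hc). exact Hd.
Qed.

Lemma mono f df a b : a <= b -> (forall x, a <= x <= b -> is_derive f x (df x)) ->
  (forall x, a <= x <= b -> df x >= 0) -> f a <= f b.
Proof.
  intros Hab Hd Hp.
  destruct (MVT_gen f a b df) as [c [Hc E]].
  - intros x Hx. rewrite Rmin_left in Hx by lra. rewrite Rmax_right in Hx by lra. apply Hd; lra.
  - intros x Hx. rewrite Rmin_left in Hx by lra. rewrite Rmax_right in Hx by lra.
    apply derivable_continuous_pt. exists (df x). apply is_derive_Reals. apply Hd; lra.
  - rewrite Rmin_left in Hc by lra. rewrite Rmax_right in Hc by lra.
    specialize (Hp c Hc). assert (0 <= df c * (b - a)) by (apply Rmult_le_pos; lra). lra.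
Qed.

Lemma lin_lb f df a b m : a <= b -> (forall x, a <= x <= b -> is_derive f x (df x)) ->
  (forall x, a <= x <= b -> df x >= m) -> f b - f a >= m * (b - a).
Proof.
  intros Hab Hd Hp.
  assert (f a - m * a <= f b - m * b); [|lra].
  apply (mono (fun x => f x - m * x) (fun x => df x - m)); auto.
  - intros x Hx. apply (is_derive_minus f (fun x => m * x)). apply Hd; auto.
    auto_derive; auto; ring.
  - intros x Hx. specialize (Hp x Hx). lra.
Qed.

Lemma rpow_pos_eq x y : 0 < x -> rpow x y = exp (y * ln x).
Proof. intros Hx. unfold rpow. destruct (Rlt_dec 0 x); [reflexivity| contradiction]. Qed.

Lemma jbr_pos t : 0 < jbr t.
Proof. unfold jbr. apply sqrt_lt_R0. nra. Qed.

Lemma jbr_mono s t : 0 <= s -> s <= t -> jbr s <= jbr t.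
Proof. intros. unfold jbr. apply sqrt_le_1_alt. nra. Qed.

Lemma lnW_mono s t : 0 <= s -> s <= t -> ln (jbr s) <= ln (jbr t).
Proof. intros. apply ln_le; [apply jbr_pos| apply jbr_mono; auto]. Qed.

Lemma jbr_ge t : 0 <= t -> 1 + t <= 2 * jbr t.
Proof.
  intros. unfold jbr. assert (Q : 0 <= 1 + t^2) by nra. assert (E := sqrt_sqrt (1 + t^2) Q).
  assert (P := sqrt_pos (1 + t^2)). set (S := sqrt (1 + t^2)) in *.
  destruct (Rle_or_lt (1 + t) (2 * S)) as [h|h]; auto.
  assert (h2 : 0 < 1 + t + 2 * S) by lra.
  assert (h3 : 0 <= (t - 1)^2) by nra. assert (h4 : (1 + t - 2 * S) * (1 + t + 2 * S) > 0) by nra. nra.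
Qed.

Lemma jbr_le t : 1 <= t -> jbr t <= 2 * t.
Proof.
  intros. unfold jbr. assert (Q : 0 <= 1 + t^2) by nra. assert (E := sqrt_sqrt (1 + t^2) Q).
  assert (P := sqrt_pos (1 + t^2)). set (S := sqrt (1 + t^2)) in *.
  destruct (Rle_or_lt S (2 * t)) as [h|h]; auto.
  assert (h2 : 0 < S + 2 * t) by lra. nra.
Qed.

Lemma exp_mono x y : x <= y -> exp x <= exp y.
Proof. intros [H|H]; [left; apply exp_increasing; auto| subst; lra]. Qed.

Lemma ln_ge x L : exp L <= x -> L <= ln x.
Proof. intros H. rewrite <- (ln_exp L). apply ln_le; [apply exp_pos| auto]. Qed.

Lemma exp_le_inv x : 0 <= x -> exp (- x) <= / (1 + x).
Proof.
  intros Hx. rewrite exp_Ropp. apply Rinv_le_contravar; [lra|]. apply exp_ineq1_le.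
Qed.

Lemma ln1m x : 0 <= x <= 1/2 -> -2 * x <= ln (1 - x).
Proof.
  intros Hx. apply ln_ge. replace (-2 * x) with (- (2 * x)) by ring.
  eapply Rle_trans; [apply exp_le_inv; lra|].
  apply Rmult_le_reg_r with (1 + 2 * x); [lra|]. rewrite Rinv_l by lra. nra.
Qed.

Definition Sys (H H' G G' G'' : R -> R) (p q C g nu : R) : Prop :=
  (forall t, 0 < t -> is_derive H t (H' t) /\ is_derive G t (G' t) /\ is_derive G' t (G'' t)) /\
  (forall t, 0 <= t -> H' t >= C * rpow (jbr t) (- g) * rpow (G t) q /\ H t >= 0 /\ H' t >= 0 /\
     G'' t + 2 * G' t >= C * rpow (jbr t) (- nu) * rpow (H t) p /\ G t > 0 /\ G' t >= 0).

Lemma step H H' G G' G'' p q C g nu lam al be eta :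
  Sys H H' G G' G'' p q C g nu -> 1 < p -> 1 < q -> 0 < C -> 0 <= g -> 0 <= nu ->
  0 <= al -> 0 <= be -> 0 < eta -> eta <= 1/4 -> p * q * al * eta <= 1 ->
  (forall t, 0 < t -> lam + al * ln t - be * ln (jbr t) <= ln (G t)) ->
  forall t, 0 < t ->
    p * q * lam + (2 + p) * ln eta + ((1 + p) * ln C - ln 2 - p - 6)
    + (2 + p + p * q * al) * ln t - (nu + 1 + p * g + p * q * be) * ln (jbr t) <= ln (G t).
Proof.
  intros [Hd Hb] Hp Hq HC Hg Hnu Hal Hbe He1 He2 Hrae IH t Ht.
  assert (Gmono : forall x y, 0 < x -> x <= y -> G x <= G y).
  { intros x y Hx Hxy. apply (mono G G'); auto.
    - intros z Hz. apply Hd; lra.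
    - intros z Hz. apply Hb; lra. }
  assert (Hmono : forall x y, 0 < x -> x <= y -> H x <= H y).
  { intros x y Hx Hxy. apply (mono H H'); auto.
    - intros z Hz. apply Hd; lra.
    - intros z Hz. apply Hb; lra. }
  set (u := (1 - 2 * eta) * t). set (w := (1 - eta) * u). set (v := (1 - eta) * t).
  assert (Hu0 : 0 < u) by (unfold u; nra).
  assert (Hw0 : 0 < w) by (unfold w; nra).
  assert (Hwu : w <= u) by (unfold w; nra).
  assert (Huv : u <= v) by (unfold u, v; nra).
  assert (Hvt : v <= t) by (unfold v; nra).
  set (lW := ln (jbr t)).
  set (m1 := C * exp (- g * ln (jbr u)) * exp (q * ln (G w))).
  assert (Hm1 : 0 < m1) by (unfold m1; repeat apply Rmult_lt_0_compat; auto using exp_pos).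
  assert (H1 : H u - H w >= m1 * (u - w)).
  { apply (lin_lb H H'); auto.
    - intros s Hs. apply Hd; lra.
    - intros s Hs. destruct (Hb s ltac:(lra)) as [h1 [_ [_ [_ [hG _]]]]].
      rewrite (rpow_pos_eq _ _ (jbr_pos s)) in h1. rewrite (rpow_pos_eq (G s) q ltac:(lra)) in h1.
      unfold m1. apply Rle_ge. eapply Rle_trans; [|apply Rge_le; exact h1].
      apply Rmult_le_compat.
      + apply Rmult_le_pos; [lra| left; apply exp_pos].
      + left; apply exp_pos.
      + apply Rmult_le_compat_l; [lra|]. apply exp_mono.
        assert (ln (jbr s) <= ln (jbr u)) by (apply lnW_mono; lra). nra.
      + apply exp_mono. assert (ln (G w) <= ln (G s)).
        { apply ln_le. destruct (Hb w ltac:(lra)) as [_ [_ [_ [_ [hw _]]]]]; lra. apply Gmono; lra. }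
        nra. }
  assert (HwH : H w >= 0) by (apply Hb; lra).
  assert (Huw : u - w = eta * u) by (unfold w; ring).
  assert (HHu : H u >= m1 * eta * u) by (rewrite Huw in H1; nra).
  assert (HHu0 : 0 < H u).
  { assert (0 < m1 * eta * u) by (apply Rmult_lt_0_compat; [apply Rmult_lt_0_compat|]; lra). lra. }
  assert (LHu : ln C + - g * ln (jbr u) + q * ln (G w) + ln eta + ln u <= ln (H u)).
  { apply ln_ge. rewrite !exp_plus, !exp_ln by lra. unfold m1 in HHu. lra. }
  set (K := C * exp (- nu * lW) * exp (p * ln (H u))).
  assert (HK : 0 < K) by (unfold K; repeat apply Rmult_lt_0_compat; auto using exp_pos).
  set (m2 := K / 2 * (1 - exp (- (2 * eta * t)))).
  assert (Hg' : forall s, v <= s <= t -> G' s >= m2).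
  { intros s Hs.
    assert (Phi : exp (2 * u) * (G' u - K / 2) <= exp (2 * s) * (G' s - K / 2)).
    { apply (mono (fun x => exp (2 * x) * (G' x - K / 2))
                  (fun x => exp (2 * x) * (G'' x + 2 * (G' x - K / 2)))); [lra| |].
      - intros x Hx. destruct (Hd x ltac:(lra)) as [_ [_ D2]].
        auto_derive. exists (G'' x). exact D2.
        replace (Derive (fun x0 : R => G' x0) x) with (G'' x) by (symmetry; apply is_derive_unique; exact D2). ring.
      - intros x Hx. destruct (Hb x ltac:(lra)) as [_ [_ [_ [h2 _]]]].
        rewrite (rpow_pos_eq _ _ (jbr_pos x)) in h2.
        assert (HHx : H u <= H x) by (apply Hmono; lra).
        rewrite (rpow_pos_eq (H x) p ltac:(lra)) in h2.
        assert (K <= C * exp (- nu * ln (jbr x)) * exp (p * ln (H x))).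
        { unfold K. apply Rmult_le_compat.
          + apply Rmult_le_pos; [lra| left; apply exp_pos].
          + left; apply exp_pos.
          + apply Rmult_le_compat_l; [lra|]. apply exp_mono.
            assert (ln (jbr x) <= lW) by (apply lnW_mono; lra). nra.
          + apply exp_mono. assert (ln (H u) <= ln (H x)) by (apply ln_le; lra). nra. }
        assert (0 < exp (2 * x)) by apply exp_pos. apply Rle_ge. apply Rmult_le_pos; lra. }
    destruct (Hb u ltac:(lra)) as [_ [_ [_ [_ [_ hG'u]]]]].
    assert (E1 : exp (2 * u) <= exp (2 * s) * exp (- (2 * eta * t))).
    { rewrite <- exp_plus. apply exp_mono. unfold v in Hs. unfold u. nra. }
    assert (E2 : exp (2 * s) * (G' s - K / 2) >= exp (2 * s) * (- exp (- (2 * eta * t)) * (K / 2))).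
    { assert (0 < exp (2 * u)) by apply exp_pos.
      assert (0 <= exp (2 * u) * G' u) by (apply Rmult_le_pos; lra).
      assert (exp (2 * u) * (K / 2) <= exp (2 * s) * exp (- (2 * eta * t)) * (K / 2))
        by (apply Rmult_le_compat_r; lra).
      nra. }
    assert (0 < exp (2 * s)) by apply exp_pos.
    apply Rge_le in E2. apply Rmult_le_reg_l in E2; auto. unfold m2. lra. }
  assert (H2 : G t - G v >= m2 * (t - v)).
  { apply (lin_lb G G'); auto.
    - intros s Hs. apply Hd; lra. }
  assert (HvG : G v > 0) by (apply Hb; lra).
  assert (Htv : t - v = eta * t) by (unfold v; ring).
  assert (Hex : 1 - exp (- (2 * eta * t)) >= eta * t / jbr t).
  { assert (A1 := exp_le_inv (2 * eta * t) ltac:(nra)).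
    assert (A2 := jbr_ge t ltac:(lra)). assert (A3 := jbr_pos t).
    assert (/ (1 + 2 * eta * t) <= 1 - eta * t / jbr t); [|lra].
    apply Rmult_le_reg_r with (1 + 2 * eta * t); [nra|]. rewrite Rinv_l by nra.
    unfold Rdiv. apply Rmult_le_reg_r with (jbr t); auto.
    replace ((1 - eta * t * / jbr t) * (1 + 2 * eta * t) * jbr t) with
       ((jbr t - eta * t) * (1 + 2 * eta * t)) by (field; lra).
    assert (0 <= eta * t) by nra. assert (0 <= 2 * jbr t - 1 - 2 * eta * t) by nra.
    assert (0 <= (eta * t) * (2 * jbr t - 1 - 2 * eta * t)) by (apply Rmult_le_pos; lra).
    nra. }
  assert (HGt : G t >= K / 2 * (eta * t / jbr t) * (eta * t)).
  { rewrite Htv in H2. unfold m2 in H2.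
    assert (0 <= eta * t / jbr t) by (unfold Rdiv; apply Rmult_le_pos; [nra| left; apply Rinv_0_lt_compat, jbr_pos]).
    assert (K / 2 * (eta * t / jbr t) <= K / 2 * (1 - exp (- (2 * eta * t)))) by (apply Rmult_le_compat_l; lra).
    assert (K / 2 * (eta * t / jbr t) * (eta * t) <= K / 2 * (1 - exp (- (2 * eta * t))) * (eta * t)) by (apply Rmult_le_compat_r; nra).
    lra. }
  assert (LGt : ln C + - nu * lW + p * ln (H u) + ln eta + ln eta + ln t + ln t + - ln 2 + - lW <= ln (G t)).
  { apply ln_ge. rewrite !exp_plus, !exp_Ropp, !exp_ln by (try apply jbr_pos; lra).
    unfold K, lW in HGt. unfold lW. rewrite exp_ln by apply jbr_pos.
    replace (C * exp (- nu * ln (jbr t)) * exp (p * ln (H u)) * eta * eta * t * t * / 2 * / jbr t)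
      with (C * exp (- nu * ln (jbr t)) * exp (p * ln (H u)) / 2 * (eta * t / jbr t) * (eta * t))
      by (field; apply Rgt_not_eq, jbr_pos).
    lra. }
  assert (Lu : ln u = ln (1 - 2 * eta) + ln t) by (unfold u; apply ln_mult; lra).
  assert (Lw : ln w = ln (1 - eta) + ln u) by (unfold w; apply ln_mult; lra).
  assert (L1 : -2 * eta <= ln (1 - eta)) by (apply ln1m; lra).
  assert (L2 : -2 * (2 * eta) <= ln (1 - 2 * eta)) by (apply ln1m; lra).
  assert (Wu : ln (jbr u) <= lW) by (apply lnW_mono; lra).
  assert (Ww : ln (jbr w) <= lW) by (apply lnW_mono; lra).
  assert (IHw := IH w Hw0).
  assert (P1 : p * (ln C + - g * ln (jbr u) + q * ln (G w) + ln eta + ln u) <= p * ln (H u))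
    by (apply Rmult_le_compat_l; lra).
  assert (P2 : p * q * (lam + al * ln w - be * ln (jbr w)) <= p * q * ln (G w))
    by (apply Rmult_le_compat_l; [apply Rmult_le_pos|]; lra).
  assert (P3 : p * g * ln (jbr u) <= p * g * lW) by (apply Rmult_le_compat_l; [apply Rmult_le_pos|]; lra).
  assert (P4 : p * q * be * ln (jbr w) <= p * q * be * lW)
    by (apply Rmult_le_compat_l; [apply Rmult_le_pos; [apply Rmult_le_pos|]|]; lra).
  assert (P5 : p * q * al * (-2 * eta + -2 * (2 * eta)) <= p * q * al * (ln (1 - eta) + ln (1 - 2 * eta)))
    by (apply Rmult_le_compat_l; [apply Rmult_le_pos; [apply Rmult_le_pos|]|]; lra).
  assert (P6 : p * (-2 * (2 * eta)) <= p * ln (1 - 2 * eta)) by (apply Rmult_le_compat_l; lra).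
  fold lW. rewrite Lw, Lu in P2. rewrite Lu in P1.
  nra.
Qed.

Theorem lemma5p3 (n : nat) (p q eps C : R) :
  (1 <= n)%nat -> 1 < p -> 1 < q ->
  (p + 1) / (p * q - 1) > (INR n - 1) / 2 ->
  (INR n - 1) / 2 * (q - 1) < 1 ->
  0 < eps -> 0 < C ->
  ~ (exists H H' G G' G'' : R -> R,
       C1_Rplus H H' /\ C1_Rplus G G' /\ C1_Rplus G' G'' /\
       forall t, 0 <= t ->
         H' t >= C * rpow (jbr t) (- ((INR n - 1) / 2 * (q - 1))) * rpow (G t) q /\
         H t >= 0 /\ H' t >= 0 /\
         G'' t + 2 * G' t >= C * rpow (jbr t) (- ((INR n - 1) / 2 * (p - 1))) * rpow (H t) p /\
         G t >= C * eps /\ G' t >= 0).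
Proof.
  intros Hn Hp Hq Hcrit _ Heps HC [H [H' [G [G' [G'' [[dH _] [[dG _] [[dG' _] Hall]]]]]]]].
  set (a := (INR n - 1) / 2) in *.
  assert (Ha : 0 <= a).
  { unfold a. assert (1 <= INR n) by (change 1 with (INR 1); apply le_INR; auto). lra. }
  set (g := a * (q - 1)) in *. set (nu := a * (p - 1)) in *.
  assert (Hg : 0 <= g) by (unfold g; nra). assert (Hnu : 0 <= nu) by (unfold nu; nra).
  assert (HCe : 0 < C * eps) by nra.
  assert (HS : Sys H H' G G' G'' p q C g nu).
  { split.
    - intros t Ht. split; [|split]; apply der_pos; auto.
    - intros t Ht. destruct (Hall t Ht) as [h1 [h2 [h3 [h4 [h5 h6]]]]].
      repeat split; auto. lra. }
  set (r := p * q).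
  assert (Hr : 1 < r) by (unfold r; nra).
  assert (Hr1 : 0 < r - 1) by lra.
  assert (HK : nu + p * g < p + 1).
  { unfold nu, g. apply Rgt_lt in Hcrit. unfold Rdiv in Hcrit.
    apply Rmult_lt_compat_r with (r := p * q - 1) in Hcrit; [|unfold r in Hr1; lra].
    rewrite Rmult_assoc, Rinv_l in Hcrit by (unfold r in Hr1; lra).
    replace (a * (p - 1) + p * (a * (q - 1))) with (a * (p * q - 1)) by ring. lra. }
  set (A := (p + 2) / (r - 1)). set (B := (nu + 1 + p * g) / (r - 1)).
  assert (HA : A * (r - 1) = p + 2) by (unfold A; field; lra).
  assert (HB : B * (r - 1) = nu + 1 + p * g) by (unfold B; field; lra).
  assert (HA0 : 0 <= A) by (unfold A; apply Rmult_le_pos; [lra| left; apply Rinv_0_lt_compat; lra]).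
  assert (HB0 : 0 <= B) by (unfold B; apply Rmult_le_pos; [nra| left; apply Rinv_0_lt_compat; lra]).
  assert (HAB : 0 < A - B).
  { assert ((A - B) * (r - 1) > 0) by nra.
    destruct (Rle_or_lt (A - B) 0); auto. nra. }
  set (c := (1 + p) * ln C - ln 2 - p - 6).
  set (eta := fun k : nat => / (4 * (A + 1) * r ^ (S k))).
  assert (Hln4 : 0 <= ln (4 * (A + 1))).
  { rewrite <- ln_1. apply ln_le; lra. }
  assert (Hlnr : 0 < ln r) by (rewrite <- ln_1; apply ln_increasing; lra).
  set (M := (2 + p) * (ln (4 * (A + 1)) + ln r) + Rabs c).
  assert (HM : 0 <= M) by (unfold M; assert (0 <= Rabs c) by apply Rabs_pos; nra).
  set (a' := M / (r - 1)). set (b := (a' + M) / (r - 1)).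
  assert (Ha' : a' * (r - 1) = M) by (unfold a'; field; lra).
  assert (Hb : b * (r - 1) = a' + M) by (unfold b; field; lra).
  assert (Ha'0 : 0 <= a') by (unfold a'; apply Rmult_le_pos; [lra| left; apply Rinv_0_lt_compat; lra]).
  assert (Hb0 : 0 <= b) by (unfold b; apply Rmult_le_pos; [lra| left; apply Rinv_0_lt_compat; lra]).
  set (X := ln (C * eps) - b).
  assert (Claim : forall k : nat, forall t, 0 < t ->
     r ^ k * X + a' * INR k + b + A * (r ^ k - 1) * ln t - B * (r ^ k - 1) * ln (jbr t) <= ln (G t)).
  { induction k as [|k IHk]; intros t Ht.
    - simpl. unfold X. replace (1 * (ln (C * eps) - b) + a' * 0 + b + A * (1 - 1) * ln t - B * (1 - 1) * ln (jbr t))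
        with (ln (C * eps)) by ring.
      apply ln_le; auto. destruct (Hall t ltac:(lra)) as [_ [_ [_ [_ [h _]]]]]. lra.
    - assert (Hrk : 1 <= r ^ k) by (apply pow_R1_Rle; lra).
      assert (Hrk1 : r ^ (S k) = r * r ^ k) by reflexivity.
      assert (Hpos : 0 < 4 * (A + 1) * r ^ (S k)) by (rewrite Hrk1; nra).
      assert (He0 : 0 < eta k) by (unfold eta; apply Rinv_0_lt_compat; auto).
      assert (He1 : eta k <= 1 / 4).
      { unfold eta. unfold Rdiv. rewrite Rmult_1_l. apply Rinv_le_contravar; [lra|]. rewrite Hrk1. nra. }
      assert (He2 : p * q * (A * (r ^ k - 1)) * eta k <= 1).
      { fold r. unfold eta. apply Rmult_le_reg_r with (4 * (A + 1) * r ^ (S k)); auto.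
        rewrite Rmult_assoc, Rinv_l by lra. rewrite Hrk1. nra. }
      assert (Hst := step H H' G G' G'' p q C g nu (r ^ k * X + a' * INR k + b) (A * (r ^ k - 1)) (B * (r ^ k - 1)) (eta k)
                HS Hp Hq HC Hg Hnu ltac:(nra) ltac:(nra) He0 He1 He2 IHk t Ht).
      assert (Leta : ln (eta k) = - (ln (4 * (A + 1)) + INR (S k) * ln r)).
      { unfold eta. rewrite ln_Rinv by auto. rewrite ln_mult by (try apply pow_lt; lra).
        rewrite ln_pow by lra. reflexivity. }
      rewrite S_INR in Leta.
      assert (Hk0 : 0 <= INR k) by apply pos_INR.
      assert (Hc : - Rabs c <= c) by (assert (- c <= Rabs c) by (rewrite <- Rabs_Ropp; apply Rle_abs); lra).
      assert (Hl : (2 + p) * ln (eta k) + c >= - M * (INR k + 1)).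
      { rewrite Leta. unfold M. assert (0 <= Rabs c) by apply Rabs_pos.
        assert (0 <= INR k * ((2 + p) * ln (4 * (A + 1)) + Rabs c)) by (apply Rmult_le_pos; nra).
        nra. }
      fold r in Hst. rewrite S_INR. rewrite Hrk1.
      replace (A * (r * r ^ k - 1)) with (2 + p + r * (A * (r ^ k - 1))) by (replace (2 + p) with (A * (r - 1)) by lra; ring).
      replace (B * (r * r ^ k - 1)) with (nu + 1 + p * g + r * (B * (r ^ k - 1))) by (replace (nu + 1 + p * g) with (B * (r - 1)) by lra; ring).
      assert (E : r * r ^ k * X + a' * (INR k + 1) + b = r * (r ^ k * X + a' * INR k + b) - M * (INR k + 1)).
      { assert (E0 : r * (r ^ k * X + a' * INR k + b) - M * (INR k + 1) - (r * r ^ k * X + a' * (INR k + 1) + b)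
           = INR k * (a' * (r - 1) - M) + (b * (r - 1) - (a' + M))) by ring.
        rewrite Ha', Hb in E0. lra. }
      rewrite E. unfold r, c in *. lra. }
  set (t := Rmax 1 (exp ((1 + B * ln 2 - X) / (A - B)))).
  assert (Ht1 : 1 <= t) by apply Rmax_l.
  assert (Hlt : (1 + B * ln 2 - X) / (A - B) <= ln t) by (apply ln_ge; apply Rmax_r).
  assert (Hlt0 : 0 <= ln t) by (rewrite <- ln_1; apply ln_le; lra).
  assert (Hlt2 : (A - B) * ln t >= 1 + B * ln 2 - X).
  { apply Rmult_le_compat_l with (r := A - B) in Hlt; [|lra].
    replace ((A - B) * ((1 + B * ln 2 - X) / (A - B))) with (1 + B * ln 2 - X) in Hlt by (field; lra). lra. }
  assert (HW : ln (jbr t) <= ln 2 + ln t).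
  { rewrite <- ln_mult by lra. apply ln_le; [apply jbr_pos| apply jbr_le; lra]. }
  destruct (Pow_x_infinity r ltac:(rewrite Rabs_right; lra) (ln (G t) + 2 - X)) as [N HN].
  specialize (HN N (le_n N)). rewrite Rabs_right in HN by (left; apply pow_lt; lra).
  assert (Hc := Claim N t ltac:(lra)).
  assert (HrN : 1 <= r ^ N) by (apply pow_R1_Rle; lra).
  assert (Hk0 : 0 <= INR N) by apply pos_INR.
  assert (P1 : B * (r ^ N - 1) * ln (jbr t) <= B * (r ^ N - 1) * (ln 2 + ln t))
    by (apply Rmult_le_compat_l; [apply Rmult_le_pos|]; lra).
  assert (P2 : (r ^ N - 1) * (1 + B * ln 2 - X) <= (r ^ N - 1) * ((A - B) * ln t))
    by (apply Rmult_le_compat_l; lra).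
  assert (0 <= a' * INR N) by (apply Rmult_le_pos; lra).
  nra.
Qed.
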